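(* Consider the multivariate linear model ${\bf y}_i={B^*}^T{\bf x}_i+\boldsymbol\epsilon_i$, $i=1,\dots,n$, with $B^*=(\boldsymbol\beta^*_1,\dots,\boldsymbol\beta^*_r)\in\mathbb{R}^{p\times r}$ an $s$-sparse matrix (all of whose columns are sparse), errors $\boldsymbol\epsilon_i$ with mean zero independent of the covariates, and $E[X^TX/n]\in\mathbb{R}^{p\times p}$ positive definite. Fix a partition $D=(D_1,\dots,D_Q)$ of $\{1,\dots,r\}$ and $\gamma\ge0$. Define $$\acute B=(\acute{\boldsymbol\beta}_1,\dots,\acute{\boldsymbol\beta}_r)=\arg\min_{\boldsymbol\beta_1,\dots,\boldsymbol\beta_r\in\mathbb{R}^p} E\left(\frac{1}{2n}\sum_{i=1}^n\sum_{c=1}^r (y_{ic}-{\bf x}_i^T\boldsymbol\beta_c)^2+\frac{\gamma}{2n}\sum_{q=1}^Q\frac{1}{|D_q|}\sum_{l,m\in D_q}\|X(\boldsymbol\beta_l-\boldsymbol\beta_m)\|_2^2\right).$$ Then for every $q$ and $l\in D_q$, $$\acute{\boldsymbol\beta}_l=\boldsymbol\beta^*_l+\frac{2\gamma}{(1+2\gamma)|D_q|}\sum_{c\in D_q,\,c\neq l}(\boldsymbol\beta^*_c-\boldsymbol\beta^*_l).$$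
   Context: $X=({\bf x}_1,\dots,{\bf x}_n)^T\in\mathbb{R}^{n\times p}$ is the design matrix, $y_{ic}$ the $c$th coordinate of ${\bf y}_i$. ''$s$-sparse'' means $B^*$ has $s$ nonzero entries. The inner sum $\sum_{l,m\in D_q}$ runs over all ordered pairs in $D_q$. The expectation is over the data generated by the model. *)

(* Defs.v *)
From HB Require Import structures.
From mathcomp Require Import all_boot all_order all_algebra.
From mathcomp Require Import all_classical all_reals all_analysis.
Set Implicit Arguments. Unset Strict Implicit. Unset Printing Implicit Defensive.
Import Order.TTheory GRing.Theory Num.Theory.
Local Open Scope classical_set_scope.
Local Open Scope ring_scope.

Definition indep_vec {d} {T : measurableType d} {R : realType}
  (P : probability T R) (I J : finType) (U : I -> T -> R) (V : J -> T -> R) :=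
  forall (A : I -> set R) (B : J -> set R),
    (forall i, measurable (A i)) -> (forall j, measurable (B j)) ->
    P ([set w | forall i, A i (U i w)] `&` [set w | forall j, B j (V j w)])
    = (P [set w | forall i, A i (U i w)] * P [set w | forall j, B j (V j w)])%E.

Definition posdef {R : realType} (p : nat) (S : 'M[R]_p) :=
  S^T = S /\ forall v : 'cV[R]_p, v != 0 -> 0 < (v^T *m S *m v) 0 0.

Definition nnz {R : realType} (p r : nat) (B : 'M[R]_(p, r)) : nat :=
  #|[set ij : 'I_p * 'I_r | B ij.1 ij.2 != 0]|.

Definition gram {d} {T : measurableType d} {R : realType} (P : probability T R)
  (n p : nat) (X : 'I_n -> 'I_p -> T -> R) : 'M[R]_p :=
  \matrix_(j, k) (fine ('E_P[fun w => \sum_(i < n) X i j w * X i k w]) / n%:R).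

Definition obj {d} {T : measurableType d} {R : realType} (n p r : nat)
  (X : 'I_n -> 'I_p -> T -> R) (Y : 'I_n -> 'I_r -> T -> R)
  (D : {set {set 'I_r}}) (gamma : R) (B : 'M[R]_(p, r)) (w : T) : R :=
  (2 * n%:R)^-1 * \sum_(i < n) \sum_(c < r)
       (Y i c w - \sum_(j < p) X i j w * B j c) ^+ 2
  + gamma / (2 * n%:R) * \sum_(Dq in D) (#|Dq|%:R)^-1 *
       \sum_(l in Dq) \sum_(m in Dq)
          \sum_(i < n) (\sum_(j < p) X i j w * (B j l - B j m)) ^+ 2.

(* Main.v *)
Require Import Defs.
From HB Require Import structures.
From mathcomp Require Import all_boot all_order all_algebra.
From mathcomp Require Import all_classical all_reals all_analysis.
From mathcomp Require Import measurable_realfun.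
From mathcomp Require Import ring lra.
Import Order.TTheory GRing.Theory Num.Theory.
Local Open Scope classical_set_scope.
Local Open Scope ring_scope.

Section indep.
Context {d} {T : measurableType d} {R : realType} (P : probability T R).
Local Open Scope ereal_scope.

Lemma indep_E0 (U V : {mfun T >-> R}) :
  P.-integrable setT (EFin \o V) ->
  P.-integrable setT (fun w => (U w * V w)%:E) ->
  (forall A B, measurable A -> measurable B ->
     P (U @^-1` A `&` V @^-1` B) = P (U @^-1` A) * P (V @^-1` B)) ->
  \int[P]_w (V w)%:E = 0 ->
  \int[P]_w (U w * V w)%:E = 0.
Proof.
move=> iV iUV hind EV0.
pose mu := distribution P U. pose nu := distribution P V.
have mUV : measurable_fun setT (fun w => (U w, V w)).
  exact: measurable_fun_pair.
pose W : {mfun T >-> (R * R)%type} := mfun_Sub (mem_set mUV).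
pose pi := distribution P W.
have piE : forall X, measurable X -> (mu \x nu) X = pi X.
  apply: product_measure_unique => A B mA mB.
  by rewrite /pi /distribution /pushforward /= -hind.
pose f := fun z : (R * R)%type => (z.1 * z.2)%:E.
have mf : measurable_fun [set: (R * R)%type] f.
  apply/measurable_EFinP; apply: measurable_funM.
  exact: measurable_fst. exact: measurable_snd.
have -> : \int[P]_w (U w * V w)%:E = \int[P]_w (f \o W) w by [].
rewrite -integral_distribution //.
rewrite (eq_measure_integral (mu \x nu)); last by move=> A mA _; symmetry; exact: piE.
have imf : (mu \x nu).-integrable setT f.
  apply/integrableP; split => //.
  rewrite (eq_measure_integral pi); last by move=> A mA _; exact: piE.
  rewrite ge0_integral_distribution //.
  - by move/integrableP : iUV => [].
  - exact: measurableT_comp.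
rewrite -(integral12_prod_meas1 imf).
apply: integral0_eq => x _.
rewrite /fubini_F /f /=.
rewrite integral_distribution //=.
- rewrite (_ : (fun y => _) = (fun w => x%:E * (V w)%:E)); last first.
    by apply/funext => w.
  by rewrite integralZl // EV0 mule0.
- apply/measurable_EFinP; exact: measurable_funM.
- exact: (integrableZl measurableT x iV).
Qed.
End indep.

Section Lspaces.
Context {d} {T : measurableType d} {R : realType} (P : probability T R).
Local Notation L1 := (Lfun P 1).
Local Notation L2 := (Lfun P 2%:E).

Lemma L2P (f : T -> R) : measurable_fun setT f ->
  P.-integrable setT (fun w => ((f w) ^+ 2)%:E) -> f \in L2.
Proof.
move=> mf /integrableP[_ fi].
rewrite inE; apply/andP; split; first by rewrite inE.
rewrite inE /= /finite_norm unlock.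
apply: poweR_lty.
rewrite (_ : (fun x => _) = (fun w => `|((f w) ^+ 2)%:E|%E)) //.
apply/funext => x /=; congr EFin.
by rewrite powR_mulrn // normrX.
Qed.

Lemma L2_L1 f : f \in L2 -> f \in L1.
Proof. by apply: Lfun_subset12; exact: fin_num_measure. Qed.

Lemma L1_add f g : f \in L1 -> g \in L1 -> (fun w => f w + g w) \in L1.
Proof. move=> hf hg; exact: (rpredD hf hg). Qed.

Lemma L1_scale k f : f \in L1 -> (fun w => k * f w) \in L1.
Proof. move=> hf; exact: (rpredZ k hf). Qed.

Lemma L2_add f g : f \in L2 -> g \in L2 -> (fun w => f w + g w) \in L2.
Proof.
move=> hf hg; have [_ h] := @Lfun_submod_closed d T R P 2%:E (lee1n 2).
have := h 1 f g hf hg; by rewrite scale1r.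
Qed.

Lemma L2_0 : (fun w : T => (0:R)) \in L2.
Proof. by have [h _] := @Lfun_submod_closed d T R P 2%:E (lee1n 2). Qed.

Lemma L2_scale k f : f \in L2 -> (fun w => k * f w) \in L2.
Proof.
move=> hf; have [_ h] := @Lfun_submod_closed d T R P 2%:E (lee1n 2).
have := h k f _ hf L2_0; by rewrite addr0.
Qed.

Lemma L1_mul f g : f \in L2 -> g \in L2 -> (fun w => f w * g w) \in L1.
Proof. move=> hf hg; exact: (Lfun2_mul_Lfun1 hf hg). Qed.

Lemma L1_sum (I : Type) (s : seq I) (Pr : pred I) (F : I -> T -> R) :
  (forall i, F i \in L1) -> (fun w => \sum_(i <- s | Pr i) F i w) \in L1.
Proof.
move=> hF; elim: s => [|i s IH].
  under eq_fun do rewrite big_nil. exact: (rpred0 (Lfun P 1)).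
under eq_fun do rewrite big_cons.
case: (Pr i) => //; exact: L1_add.
Qed.

Lemma L2_sum (I : Type) (s : seq I) (Pr : pred I) (F : I -> T -> R) :
  (forall i, F i \in L2) -> (fun w => \sum_(i <- s | Pr i) F i w) \in L2.
Proof.
move=> hF; elim: s => [|i s IH].
  under eq_fun do rewrite big_nil. exact: L2_0.
under eq_fun do rewrite big_cons.
case: (Pr i) => //; exact: L2_add.
Qed.

Definition E (f : T -> R) : R := fine ('E_P[f])%E.

Lemma EE f : f \in L1 -> ('E_P[f])%E = (E f)%:E.
Proof. by move=> hf; rewrite /E fineK // expectation_fin_num. Qed.

Lemma E_add f g : f \in L1 -> g \in L1 -> E (fun w => f w + g w) = E f + E g.
Proof. by move=> hf hg; rewrite /E (expectationD hf hg) fineD ?expectation_fin_num. Qed.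

Lemma E_scale k f : f \in L1 -> E (fun w => k * f w) = k * E f.
Proof. move=> hf; have := expectationZl k hf; rewrite /E (_ : (fun w => k * f w) = k \o* f) => [->|]; last by apply/funext => w /=; rewrite mulrC. by rewrite fineM ?expectation_fin_num. Qed.

Lemma E_sum (I : Type) (s : seq I) (Pr : pred I) (F : I -> T -> R) :
  (forall i, F i \in L1) ->
  E (fun w => \sum_(i <- s | Pr i) F i w) = \sum_(i <- s | Pr i) E (F i).
Proof.
move=> hF; elim: s => [|i s IH].
  under eq_fun do rewrite big_nil. by rewrite big_nil /E (expectation_cst P 0).
under eq_fun do rewrite big_cons. rewrite big_cons.
case: (Pr i) => //; rewrite E_add ?IH //; exact: L1_sum.
Qed.

Lemma E_ext f g : f =1 g -> E f = E g.
Proof. by move=> fg; rewrite (funext fg). Qed.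

End Lspaces.
Arguments L2P {d T R P f}.
Arguments L2_L1 {d T R P f}.
Arguments L1_add {d T R P f g}.
Arguments L1_scale {d T R P} k {f}.
Arguments L2_add {d T R P f g}.
Arguments L2_scale {d T R P} k {f}.
Arguments L1_mul {d T R P f g}.
Arguments L1_sum {d T R P I} s Pr {F}.
Arguments L2_sum {d T R P I} s Pr {F}.
Arguments E_add {d T R P f g}.
Arguments E_scale {d T R P} k {f}.
Arguments E_sum {d T R P I} s Pr {F}.
Arguments E_ext {d T R P f} g.


Definition gb {R : realType} {p : nat} (G : 'M[R]_p) (x y : 'I_p -> R) : R :=
  \sum_(j < p) \sum_(k < p) x j * G j k * y k.

Definition dl {R : realType} {p r : nat} (Bstar B : 'M[R]_(p, r)) c :=
  fun j => Bstar j c - B j c.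
Definition Dl {R : realType} {p r : nat} (B : 'M[R]_(p, r)) l m :=
  fun j => B j l - B j m.
Definition Q {R : realType} {p r : nat} (G : 'M[R]_p) (Bstar : 'M[R]_(p, r))
  (D : {set {set 'I_r}}) (gamma : R) (B : 'M[R]_(p, r)) :=
  \sum_(c < r) gb G (dl Bstar B c) (dl Bstar B c) + gamma * \sum_(Dq in D) (#|Dq|%:R)^-1 *
     \sum_(l in Dq) \sum_(m in Dq) gb G (Dl B l m) (Dl B l m).

Section Det.
Context {R : realType} {p r : nat} (G : 'M[R]_p) (Bstar : 'M[R]_(p, r))
  (D : {set {set 'I_r}}) (gamma : R).
Hypothesis Gsym : G^T = G.

Lemma gb_sym x y : gb G x y = gb G y x.
Proof.
rewrite /gb exchange_big /=; apply: eq_bigr => j _; apply: eq_bigr => k _.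
have := congr1 (fun M : 'M[R]_p => M k j) Gsym; rewrite mxE => ->; ring.
Qed.

Lemma gb_ext x x' y y' : x =1 x' -> y =1 y' -> gb G x y = gb G x' y'.
Proof. by move=> hx hy; rewrite (funext hx) (funext hy). Qed.

Lemma gbZr x a y : gb G x (fun k => a * y k) = a * gb G x y.
Proof.
rewrite /gb mulr_sumr; apply: eq_bigr => j _; rewrite mulr_sumr.
by apply: eq_bigr => k _; ring.
Qed.

Lemma gbZl a x y : gb G (fun j => a * x j) y = a * gb G x y.
Proof. by rewrite gb_sym gbZr gb_sym. Qed.

Lemma gbDl x1 x2 y : gb G (fun j => x1 j + x2 j) y = gb G x1 y + gb G x2 y.
Proof.
rewrite /gb -big_split /=; apply: eq_bigr => j _; rewrite -big_split /=.
by apply: eq_bigr => k _; ring.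
Qed.

Lemma gbNl x y : gb G (fun j => - x j) y = - gb G x y.
Proof.
rewrite -[RHS]mulN1r -gbZl; apply: gb_ext => // j; by rewrite mulN1r.
Qed.

Lemma gbsuml (I : Type) (s : seq I) (Pr : pred I) (F : I -> 'I_p -> R) y :
  gb G (fun j => \sum_(i <- s | Pr i) F i j) y = \sum_(i <- s | Pr i) gb G (F i) y.
Proof.
elim: s => [|i s IH].
  rewrite big_nil /gb; apply: big1 => j _; apply: big1 => k _; by rewrite big_nil !mul0r.
rewrite big_cons; case hi: (Pr i).
  rewrite -IH -gbDl; apply: gb_ext => // j; by rewrite big_cons hi.
rewrite -IH; apply: gb_ext => // j; by rewrite big_cons hi.
Qed.

Definition quadeq (f : R -> R) (a b c : R) := forall t, f t = a + t * b + t ^+ 2 * c.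

Lemma quadeq_add f g a b c a' b' c' : quadeq f a b c -> quadeq g a' b' c' ->
  quadeq (fun t => f t + g t) (a + a') (b + b') (c + c').
Proof. by move=> hf hg t; rewrite hf hg; ring. Qed.

Lemma quadeq_scale k f a b c : quadeq f a b c ->
  quadeq (fun t => k * f t) (k * a) (k * b) (k * c).
Proof. by move=> hf t; rewrite hf; ring. Qed.

Lemma quadeq_sum (I : Type) (s : seq I) (Pr : pred I) (F : I -> R -> R) a b c :
  (forall i, quadeq (F i) (a i) (b i) (c i)) ->
  quadeq (fun t => \sum_(i <- s | Pr i) F i t)
    (\sum_(i <- s | Pr i) a i) (\sum_(i <- s | Pr i) b i) (\sum_(i <- s | Pr i) c i).
Proof.
move=> hF t; under eq_bigr do rewrite hF.
by rewrite !big_split /= -!mulr_sumr.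
Qed.

Lemma quadeq_gb (u : R -> 'I_p -> R) x y :
  (forall t j, u t j = x j + t * y j) ->
  quadeq (fun t => gb G (u t) (u t)) (gb G x x) (gb G x y + gb G y x) (gb G y y).
Proof.
move=> hu t.
have h : quadeq (fun t => \sum_(j < p) \sum_(k < p) (x j + t * y j) * G j k * (x k + t * y k))
  (\sum_(j < p) \sum_(k < p) x j * G j k * x k)
  (\sum_(j < p) \sum_(k < p) (x j * G j k * y k + y j * G j k * x k))
  (\sum_(j < p) \sum_(k < p) y j * G j k * y k).
  by apply: quadeq_sum => j; apply: quadeq_sum => k; move=> s; ring.
have e : gb G (u t) (u t) = \sum_(j < p) \sum_(k < p) (x j + t * y j) * G j k * (x k + t * y k).
  by apply: eq_bigr => j _; apply: eq_bigr => k _; rewrite !hu.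
rewrite e h; congr (_ + _ * _ + _).
rewrite /gb -big_split /=; apply: eq_bigr => j _; by rewrite -big_split.
Qed.

Lemma quadeq_min f a b c : quadeq f a b c -> (forall t, a <= f t) -> b = 0.
Proof.
move=> hq hmin; apply/eqP; apply/negPn/negP => bnz.
pose t := - b / (`|c| + 1).
have hc : 0 < `|c| + 1 by rewrite ltr_wpDl.
have := hmin t; rewrite hq -subr_ge0 => h.
have e : (a + t * b + t ^+ 2 * c - a) * (`|c| + 1) ^+ 2 = b ^+ 2 * (c - `|c| - 1).
  rewrite /t; field; by rewrite gt_eqF.
have : 0 <= b ^+ 2 * (c - `|c| - 1) by rewrite -e mulr_ge0 // sqr_ge0.
have hb2 : 0 < b ^+ 2 by rewrite lt_def sqrf_eq0 bnz sqr_ge0.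
have hcc : c - `|c| - 1 < 0 by have := ler_norm c; lra.
by rewrite pmulr_rge0 // leNgt hcc.
Qed.


Lemma sum_ind (I : finType) (A : {pred I}) (l0 : I) (F : I -> R) : l0 \in A ->
  \sum_(l in A) (l == l0)%:R * F l = F l0.
Proof.
move=> hl0; rewrite (bigD1 l0) //= eqxx mul1r big1 ?addr0 //.
by move=> l /andP[_ /negbTE ->]; rewrite mul0r.
Qed.

Lemma sum_indT (I : finType) (l0 : I) (F : I -> R) :
  \sum_(l : I) (l == l0)%:R * F l = F l0.
Proof.
rewrite (bigD1 l0) //= eqxx mul1r big1 ?addr0 //.
by move=> l /negbTE ->; rewrite mul0r.
Qed.

Lemma sum_ind2 (I : finType) (A : {pred I}) (l0 : I) (F : I -> I -> R) : l0 \in A ->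
  \sum_(l in A) \sum_(m in A) (((l == l0)%:R - (m == l0)%:R) * F l m) =
  \sum_(m in A) F l0 m - \sum_(l in A) F l l0.
Proof.
move=> hl0.
under eq_bigr do under eq_bigr do rewrite mulrBl.
under eq_bigr do rewrite sumrB.
rewrite sumrB; congr (_ - _).
  under eq_bigr do rewrite -mulr_sumr.
  by rewrite sum_ind.
rewrite exchange_big /=.
under eq_bigr do rewrite -mulr_sumr.
by rewrite sum_ind.
Qed.

Lemma stationary (Bac : 'M[R]_(p, r)) :
  (forall t (H : 'M[R]_(p, r)), Q G Bstar D gamma Bac <= Q G Bstar D gamma (Bac + t *: H)) ->
  finset.partition D [set: 'I_r] ->
  forall Dq, Dq \in D -> forall l0, l0 \in Dq -> forall w,
  gb G (fun j => (Bac j l0 - Bstar j l0) +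
     2 * gamma / #|Dq|%:R * \sum_(m in Dq) (Bac j l0 - Bac j m)) w = 0.
Proof.
move=> hmin hD Dq hDq l0 hl0 w.
pose H : 'M[R]_(p, r) := \matrix_(j, c) ((c == l0)%:R * w j).
pose yv (c : 'I_r) := fun j => - H j c.
pose zv (l m : 'I_r) := fun j => H j l - H j m.
pose bexpr := \sum_(c < r) (gb G (dl Bstar Bac c) (yv c) + gb G (yv c) (dl Bstar Bac c))
  + gamma * \sum_(Dq in D) (#|Dq|%:R)^-1 * \sum_(l in Dq) \sum_(m in Dq)
      (gb G (Dl Bac l m) (zv l m) + gb G (zv l m) (Dl Bac l m)).
have [cc hq] : exists cc, quadeq (fun t => Q G Bstar D gamma (Bac + t *: H))
    (Q G Bstar D gamma Bac) bexpr cc.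
  eexists; rewrite /Q /bexpr; apply: quadeq_add.
    apply: quadeq_sum => c; apply: quadeq_gb => t j; rewrite /dl /yv !mxE; ring.
  apply: quadeq_scale; apply: quadeq_sum => Dq'; apply: quadeq_scale.
  apply: quadeq_sum => l; apply: quadeq_sum => m; apply: quadeq_gb => t j.
  rewrite /Dl /zv !mxE; ring.
have hb : bexpr = 0 := quadeq_min _ _ _ _ hq (fun t => hmin t H).
have p1 : forall c, gb G (dl Bstar Bac c) (yv c) + gb G (yv c) (dl Bstar Bac c)
    = (c == l0)%:R * (-2 * gb G (dl Bstar Bac c) w).
  move=> c.
  have e : gb G (dl Bstar Bac c) (yv c) = - (c == l0)%:R * gb G (dl Bstar Bac c) w.
    rewrite -gbZr; apply: gb_ext => // k; rewrite /yv mxE; ring.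
  rewrite [gb G (yv c) _]gb_sym e; ring.
have p2 : forall l m, gb G (Dl Bac l m) (zv l m) + gb G (zv l m) (Dl Bac l m)
    = ((l == l0)%:R - (m == l0)%:R) * (2 * gb G (Dl Bac l m) w).
  move=> l m.
  have e : gb G (Dl Bac l m) (zv l m) = ((l == l0)%:R - (m == l0)%:R) * gb G (Dl Bac l m) w.
    rewrite -gbZr; apply: gb_ext => // k; rewrite /zv !mxE; ring.
  rewrite [gb G (zv l m) _]gb_sym e; ring.
move: hD => /and3P[_ tD _]; move/finset.trivIsetP: tD => tD.
have p3 : forall Dq', Dq' \in D -> Dq' != Dq ->
    \sum_(l in Dq') \sum_(m in Dq') (gb G (Dl Bac l m) (zv l m) + gb G (zv l m) (Dl Bac l m)) = 0.
  move=> Dq' hDq' ne; have dis := tD _ _ hDq' hDq ne.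
  have nl : forall l, l \in Dq' -> (l == l0) = false.
    move=> l hl; apply/negbTE; apply/eqP => e; subst l.
    by rewrite (disjointFr dis hl) in hl0.
  apply: big1 => l hl; apply: big1 => m hm; rewrite p2 (nl l hl) (nl m hm); ring.
have p4 : \sum_(l in Dq) \sum_(m in Dq) (gb G (Dl Bac l m) (zv l m) + gb G (zv l m) (Dl Bac l m))
    = 4 * \sum_(m in Dq) gb G (Dl Bac l0 m) w.
  under eq_bigr do under eq_bigr do rewrite p2.
  rewrite sum_ind2 //.
  have e : forall l, gb G (Dl Bac l l0) w = - gb G (Dl Bac l0 l) w.
    move=> l; rewrite -gbNl; apply: gb_ext => // k; rewrite /Dl; ring.
  under [X in _ - X]eq_bigr do rewrite e.
  rewrite -!mulr_sumr sumrN; ring.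
rewrite /bexpr in hb.
rewrite (eq_bigr _ (fun c _ => p1 c)) sum_indT in hb.
have z : \sum_(Dq' in D | Dq' != Dq) #|Dq'|%:R^-1 * \sum_(l in Dq') \sum_(m in Dq')
    (gb G (Dl Bac l m) (zv l m) + gb G (zv l m) (Dl Bac l m)) = 0.
  by apply: big1 => Dq' /andP[h1 h2]; rewrite p3 ?mulr0.
rewrite (bigD1 Dq) //= p4 z addr0 in hb.
rewrite gbDl.
have e1 : gb G (fun j => Bac j l0 - Bstar j l0) w = - gb G (dl Bstar Bac l0) w.
  by rewrite -gbNl; apply: gb_ext => // j; rewrite /dl; ring.
have e2 : gb G (fun j => 2 * gamma / #|Dq|%:R * \sum_(m in Dq) (Bac j l0 - Bac j m)) w
    = 2 * gamma / #|Dq|%:R * \sum_(m in Dq) gb G (Dl Bac l0 m) w.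
  by rewrite gbZl gbsuml.
rewrite e1 e2.
transitivity ((-2 * gb G (dl Bstar Bac l0) w + gamma * (#|Dq|%:R^-1 *
  (4 * \sum_(m in Dq) gb G (Dl Bac l0 m) w))) / 2).
  have kn : (#|Dq|%:R : R) != 0.
    by rewrite pnatr_eq0 -lt0n card_gt0; apply/set0Pn; exists l0.
  by field.
have -> : (-2 * gb G (dl Bstar Bac l0) w + gamma * (#|Dq|%:R^-1 *
  (4 * \sum_(m in Dq) gb G (Dl Bac l0 m) w))) = 0 by exact: hb.
by rewrite mul0r.
Qed.

End Det.

Lemma posdef_zero {R : realType} {p : nat} (G : 'M[R]_p) (s : 'I_p -> R) :
  (forall v : 'cV[R]_p, v != 0 -> 0 < (v^T *m G *m v) 0 0) ->
  gb G s s = 0 -> forall j, s j = 0.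
Proof.
move=> hpos hs j.
pose v : 'cV[R]_p := \col_j s j.
have e : (v^T *m G *m v) 0 0 = gb G s s.
  rewrite mxE /gb exchange_big /=; apply: eq_bigr => k _.
  rewrite mxE mulr_suml; apply: eq_bigr => i _; by rewrite !mxE.
have : v == 0.
  apply/negPn/negP => /hpos; by rewrite e hs ltxx.
move/eqP/matrixP/(_ j 0); by rewrite !mxE.
Qed.

Lemma final_alg {R : realType} {p r : nat} (Bstar Bac : 'M[R]_(p, r)) (gamma : R)
  (Dq : {set 'I_r}) (l : 'I_r) :
  0 <= gamma -> l \in Dq ->
  (forall l', l' \in Dq -> forall j, (Bac j l' - Bstar j l') +
     2 * gamma / #|Dq|%:R * \sum_(m in Dq) (Bac j l' - Bac j m) = 0) ->
  col l Bac = col l Bstar +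
      (2 * gamma / ((1 + 2 * gamma) * #|Dq|%:R)) *:
        \sum_(c in Dq | c != l) (col c Bstar - col l Bstar).
Proof.
move=> g0 hl hs; apply/matrixP => j z.
rewrite !mxE summxE.
under eq_bigr do rewrite !mxE.
have kn : (#|Dq|%:R : R) != 0.
  by rewrite pnatr_eq0 -lt0n card_gt0; apply/set0Pn; exists l.
have gn : (1 + 2 * gamma : R) != 0 by rewrite gt_eqF //; lra.
set k := (#|Dq|%:R : R).
set Sa := \sum_(m in Dq) Bac j m.
set Sb := \sum_(m in Dq) Bstar j m.
have hs' : forall l', l' \in Dq ->
    (Bac j l' - Bstar j l') + 2 * gamma / k * (Bac j l' * k - Sa) = 0.
  move=> l' hl'; rewrite -(hs l' hl' j); congr (_ + _ * _).
  by rewrite sumrB sumr_const -mulr_natr.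
have eS : Sa = Sb.
  have : \sum_(l' in Dq) ((Bac j l' - Bstar j l') + 2 * gamma / k * (Bac j l' * k - Sa)) = 0.
    by apply: big1 => l' hl'; exact: hs'.
  rewrite big_split /= sumrB -mulr_sumr sumrB -mulr_suml sumr_const -mulr_natr -/Sa -/Sb -/k.
  move=> h; have : Sa - Sb = 0 by rewrite -h; ring.
  by move/eqP; rewrite subr_eq0 => /eqP.
have eT : \sum_(c in Dq | c != l) (Bstar j c - Bstar j l) = Sb - Bstar j l * k.
  have e0 : \sum_(c in Dq) (Bstar j c - Bstar j l) = Sb - Bstar j l * k.
    by rewrite sumrB sumr_const -mulr_natr.
  by rewrite (bigD1 l) //= subrr add0r in e0.
rewrite eT.
have h := hs' l hl; rewrite eS in h.
have e : (Bac j l - (Bstar j l + 2 * gamma / ((1 + 2 * gamma) * k) * (Sb - Bstar j l * k)))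
    * (1 + 2 * gamma) = (Bac j l - Bstar j l) + 2 * gamma / k * (Bac j l * k - Sb).
  by field; rewrite kn gn.
rewrite h in e; move/eqP: e; rewrite mulf_eq0 (negbTE gn) orbF subr_eq0 => /eqP.
done.
Qed.

Section Expect.
Context {d} {T : measurableType d} {R : realType} (P : probability T R)
  (n p r : nat) (X : 'I_n -> 'I_p -> T -> R) (eps : 'I_n -> 'I_r -> T -> R).
Hypotheses (n0 : (0 < n)%N)
  (mX : forall i j, measurable_fun setT (X i j))
  (mE : forall i c, measurable_fun setT (eps i c))
  (iX : forall i j, P.-integrable setT (fun w => ((X i j w) ^+ 2)%:E))
  (iE : forall i c, P.-integrable setT (fun w => ((eps i c w) ^+ 2)%:E))
  (E0 : forall i c, ('E_P[eps i c] = 0)%E)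
  (ind : indep_vec P (fun ij : 'I_n * 'I_p => X ij.1 ij.2)
              (fun ic : 'I_n * 'I_r => eps ic.1 ic.2)).
Local Notation L1 := (Lfun P 1).
Local Notation L2 := (Lfun P 2%:E).
Local Notation E := (E P).

Lemma XL2 i j : X i j \in L2. Proof. exact: L2P. Qed.
Lemma epsL2 i c : eps i c \in L2. Proof. exact: L2P. Qed.

Definition lin i (v : 'I_p -> R) := fun w => \sum_(j < p) X i j w * v j.

Lemma linL2 i v : lin i v \in L2.
Proof.
apply: L2_sum => j; have := L2_scale (v j) (XL2 i j).
by rewrite (_ : (fun w => v j * X i j w) = (fun w => X i j w * v j)) //; apply/funext => w; rewrite mulrC.
Qed.

Lemma E_epsX i c j : E (fun w => eps i c w * X i j w) = 0.
Proof.
pose U : {mfun T >-> R} := mfun_Sub (mem_set (mX i j)).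
pose V : {mfun T >-> R} := mfun_Sub (mem_set (mE i c)).
have h := @indep_E0 _ _ _ P U V.
rewrite /E.
have -> : ('E_P[(fun w => (eps i c w * X i j w)%R)])%E = (\int[P]_w (U w * V w)%:E)%E.
  rewrite unlock; apply: eq_integral => w _ /=; by rewrite mulrC.
rewrite h //.
- by apply/Lfun1_integrable; apply: L2_L1; exact: epsL2.
- have := L1_mul (XL2 i j) (epsL2 i c).
  by move/Lfun1_integrable.
- move=> A B mA mB.
  pose A' := fun ij : 'I_n * 'I_p => if ij == (i, j) then A else setT.
  pose B' := fun ic : 'I_n * 'I_r => if ic == (i, c) then B else setT.
  have mA' : forall ij, measurable (A' ij).
    by move=> ij; rewrite /A'; case: ifP.
  have mB' : forall ic, measurable (B' ic).
    by move=> ic; rewrite /B'; case: ifP.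
  have eA : [set w | forall ij, A' ij (X ij.1 ij.2 w)] = U @^-1` A.
    apply/seteqP; split => w /=.
      by move/(_ (i, j)); rewrite /A' eqxx.
    by move=> Aw [i' j']; rewrite /A'; case: ifPn => // /eqP [-> ->].
  have eB : [set w | forall ic, B' ic (eps ic.1 ic.2 w)] = V @^-1` B.
    apply/seteqP; split => w /=.
      by move/(_ (i, c)); rewrite /B' eqxx.
    by move=> Bw [i' c']; rewrite /B'; case: ifPn => // /eqP [-> ->].
  have := ind A' B' mA' mB'. by rewrite eA eB.
- by move: (E0 i c); rewrite unlock.
Qed.


Lemma L1_sq f : f \in L2 -> (fun w => f w ^+ 2) \in L1.
Proof. by move=> hf; have := L1_mul hf hf; rewrite (_ : (fun w => f w * f w) = (fun w => f w ^+ 2)) //; apply/funext => w; rewrite expr2. Qed.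

Lemma L1_XX i j k : (fun w => X i j w * X i k w) \in L1.
Proof. exact: L1_mul (XL2 i j) (XL2 i k). Qed.

Lemma E_linlin i a b : E (fun w => lin i a w * lin i b w) =
  \sum_(j < p) \sum_(k < p) (a j * b k) * E (fun w => X i j w * X i k w).
Proof.
rewrite (E_ext (fun w => \sum_(j < p) \sum_(k < p) (a j * b k) * (X i j w * X i k w))).
  rewrite E_sum; last by move=> j; apply: L1_sum => k; apply: L1_scale; exact: L1_XX.
  apply: eq_bigr => j _; rewrite E_sum; last by move=> k; apply: L1_scale; exact: L1_XX.
  by apply: eq_bigr => k _; rewrite E_scale //; exact: L1_XX.
move=> w; rewrite /lin mulr_suml; apply: eq_bigr => j _; rewrite mulr_sumr.
by apply: eq_bigr => k _; ring.
Qed.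

Lemma E_epslin i c b : E (fun w => eps i c w * lin i b w) = 0.
Proof.
rewrite (E_ext (fun w => \sum_(k < p) b k * (eps i c w * X i k w))).
  rewrite E_sum; last by move=> k; apply: L1_scale; exact: L1_mul (epsL2 i c) (XL2 i k).
  by apply: big1 => k _; rewrite E_scale ?E_epsX ?mulr0 //; exact: L1_mul (epsL2 i c) (XL2 i k).
by move=> w; rewrite /lin mulr_sumr; apply: eq_bigr => k _; ring.
Qed.

Lemma sum_E_XX j k : \sum_(i < n) E (fun w => X i j w * X i k w) = n%:R * gram P X j k.
Proof.
rewrite mxE -[fine _]/(E (fun w => \sum_(i < n) X i j w * X i k w)).
rewrite E_sum; last by move=> i; exact: L1_XX.
have nz : (n%:R : R) != 0 by rewrite pnatr_eq0 -lt0n.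
by field.
Qed.

Lemma sum_E_linlin a b : \sum_(i < n) E (fun w => lin i a w * lin i b w) =
  n%:R * gb (gram P X) a b.
Proof.
under eq_bigr do rewrite E_linlin.
rewrite exchange_big /= /gb mulr_sumr; apply: eq_bigr => j _.
rewrite exchange_big /= mulr_sumr; apply: eq_bigr => k _.
rewrite -mulr_sumr sum_E_XX; ring.
Qed.


Variables (Bstar : 'M[R]_(p, r)) (D : {set {set 'I_r}}) (gamma : R).
Let Y := fun i c w => \sum_(j < p) X i j w * Bstar j c + eps i c w.
Let G := gram P X.

Definition C0 := \sum_(i < n) \sum_(c < r) E (fun w => eps i c w ^+ 2).

Lemma resE (B : 'M[R]_(p, r)) i c : (fun w => Y i c w - \sum_(j < p) X i j w * B j c) =
  (fun w => lin i (dl Bstar B c) w + eps i c w).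
Proof.
apply/funext => w; rewrite /Y /lin /dl.
under [in RHS]eq_bigr do rewrite mulrBr.
rewrite sumrB; ring.
Qed.

Lemma resL2 (B : 'M[R]_(p, r)) i c : (fun w => Y i c w - \sum_(j < p) X i j w * B j c) \in L2.
Proof. rewrite resE; apply: L2_add; [exact: linL2|exact: epsL2]. Qed.

Lemma E_res (B : 'M[R]_(p, r)) i c : E (fun w => (Y i c w - \sum_(j < p) X i j w * B j c) ^+ 2) =
  E (fun w => eps i c w ^+ 2) + E (fun w => lin i (dl Bstar B c) w * lin i (dl Bstar B c) w).
Proof.
have e := resE B i c.
rewrite (E_ext (fun w => (eps i c w ^+ 2 + 2 * (eps i c w * lin i (dl Bstar B c) w))
   + lin i (dl Bstar B c) w * lin i (dl Bstar B c) w)); last first.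
  move=> w; have := congr1 (fun f => f w) e => /= ->; ring.
have h1 : (fun w => eps i c w ^+ 2) \in L1 by apply: L1_sq; exact: epsL2.
have h2 : (fun w => eps i c w * lin i (dl Bstar B c) w) \in L1.
  by apply: L1_mul; [exact: epsL2|exact: linL2].
have h3 : (fun w => lin i (dl Bstar B c) w * lin i (dl Bstar B c) w) \in L1.
  by apply: L1_mul; exact: linL2.
rewrite E_add //; last by apply: L1_add => //; exact: L1_scale.
by rewrite E_add //; [rewrite E_scale // E_epslin mulr0 addr0|exact: L1_scale].
Qed.

Lemma objL1 (B : 'M[R]_(p, r)) : obj X Y D gamma B \in L1.
Proof.
rewrite /obj; apply: L1_add; apply: L1_scale.
  apply: L1_sum => i; apply: L1_sum => c; apply: L1_sq; exact: resL2.
apply: L1_sum => Dq; apply: L1_scale; apply: L1_sum => l; apply: L1_sum => m.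
apply: L1_sum => i; apply: L1_sq; exact: linL2 i (Dl B l m).
Qed.

Lemma E_obj (B : 'M[R]_(p, r)) : E (obj X Y D gamma B) = (2 * n%:R)^-1 * C0 + Q G Bstar D gamma B / 2.
Proof.
have L1res : forall i c, (fun w => (Y i c w - \sum_(j < p) X i j w * B j c) ^+ 2) \in L1.
  by move=> i c; apply: L1_sq; exact: resL2.
have L1D : forall l m i, (fun w => (\sum_(j < p) X i j w * (B j l - B j m)) ^+ 2) \in L1.
  by move=> l m i; apply: L1_sq; exact: linL2 i (Dl B l m).
pose L1Di l m := L1_sum (index_enum 'I_n) xpredT (L1D l m).
pose L1Dm l (Dq : {set 'I_r}) := L1_sum (index_enum 'I_r) (mem Dq) (L1Di l).
pose L1Dl (Dq : {set 'I_r}) := L1_sum (index_enum 'I_r) (mem Dq) (fun l => L1Dm l Dq).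
pose L1Dq (Dq : {set 'I_r}) := L1_scale (#|Dq|%:R^-1) (L1Dl Dq).
pose L1pen := L1_sum (index_enum {set 'I_r}) (mem D) L1Dq.
pose L1ri i := L1_sum (index_enum 'I_r) xpredT (L1res i).
pose L1r := L1_sum (index_enum 'I_n) xpredT L1ri.
rewrite /obj.
rewrite (E_add (L1_scale _ L1r) (L1_scale _ L1pen)).
rewrite (E_scale _ L1r) (E_scale _ L1pen).
rewrite (E_sum _ _ L1ri).
under eq_bigr => i _ do rewrite (E_sum _ _ (L1res i)).
under eq_bigr do under eq_bigr do rewrite E_res.
rewrite (E_sum _ _ L1Dq).
under [X in _ + _ * X]eq_bigr => Dq _ do rewrite (E_scale _ (L1Dl Dq)) (E_sum _ _ (fun l => L1Dm l Dq)).
under [X in _ + _ * X]eq_bigr => Dq _ do under eq_bigr => l _ do rewrite (E_sum _ _ (L1Di l)).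
under [X in _ + _ * X]eq_bigr => Dq _ do under eq_bigr => l _ do under eq_bigr => m _ do rewrite (E_sum _ _ (L1D l m)).
have pen l m : \sum_(i < n) E (fun w => (\sum_(j < p) X i j w * (B j l - B j m)) ^+ 2)
    = n%:R * gb G (Dl B l m) (Dl B l m).
  rewrite -sum_E_linlin; apply: eq_bigr => i _; apply: E_ext => w; by rewrite expr2.
under [X in _ + _ * X]eq_bigr => Dq _ do under eq_bigr => l _ do under eq_bigr => m _ do rewrite pen.
under [X in _ + _ * X]eq_bigr => Dq _ do under eq_bigr => l _ do rewrite -mulr_sumr.
under [X in _ + _ * X]eq_bigr => Dq _ do rewrite -mulr_sumr mulrCA.
rewrite -mulr_sumr.
under [X in _ * X + _]eq_bigr => i _ do rewrite big_split /=.
rewrite big_split /= -/C0 [X in _ * (_ + X) + _]exchange_big /=.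
under [X in _ * (_ + X) + _]eq_bigr => c _ do rewrite sum_E_linlin.
rewrite -mulr_sumr /Q.
have nz : (n%:R : R) != 0 by rewrite pnatr_eq0 -lt0n.
by field.
Qed.



Lemma main_result (Bac : 'M[R]_(p, r)) : posdef (gram P X) ->
  finset.partition D [set: 'I_r] -> 0 <= gamma ->
  (forall B : 'M[R]_(p, r),
     ('E_P[obj X Y D gamma Bac] <= 'E_P[obj X Y D gamma B])%E) ->
  forall Dq, Dq \in D -> forall l, l \in Dq ->
    col l Bac = col l Bstar +
      (2 * gamma / ((1 + 2 * gamma) * #|Dq|%:R)) *:
        \sum_(c in Dq | c != l) (col c Bstar - col l Bstar).
Proof.
move=> [Gsym Gpos] hD g0 hmin Dq hDq l hl.
have hQ : forall B, Q G Bstar D gamma Bac <= Q G Bstar D gamma B.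
  move=> B; have := hmin B.
  rewrite (EE P _ (objL1 Bac)) (EE P _ (objL1 B)) lee_fin !E_obj => h; lra.
apply: final_alg => // l' hl' j.
pose s := fun j => (Bac j l' - Bstar j l') +
     2 * gamma / #|Dq|%:R * \sum_(m in Dq) (Bac j l' - Bac j m).
have hs := stationary G Bstar D gamma Gsym Bac (fun t H => hQ (Bac + t *: H)) hD Dq hDq l' hl' s.
exact: (posdef_zero G s Gpos hs j).
Qed.

End Expect.

Theorem corollary1 (R : realType) (d : measure_display) (T : measurableType d)
  (P : probability T R) (n p r s : nat)
  (X : 'I_n -> 'I_p -> T -> R) (eps : 'I_n -> 'I_r -> T -> R)
  (Bstar : 'M[R]_(p, r)) (D : {set {set 'I_r}}) (gamma : R)
  (Bac : 'M[R]_(p, r)) :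
  (0 < n)%N ->
  nnz Bstar = s ->
  (forall i j, measurable_fun setT (X i j)) ->
  (forall i c, measurable_fun setT (eps i c)) ->
  (forall i j, P.-integrable setT (fun w => ((X i j w) ^+ 2)%:E)) ->
  (forall i c, P.-integrable setT (fun w => ((eps i c w) ^+ 2)%:E)) ->
  (forall i c, ('E_P[eps i c] = 0)%E) ->
  indep_vec P (fun ij : 'I_n * 'I_p => X ij.1 ij.2)
              (fun ic : 'I_n * 'I_r => eps ic.1 ic.2) ->
  posdef (gram P X) ->
  finset.partition D [set: 'I_r] ->
  0 <= gamma ->
  let Y := fun i c w => \sum_(j < p) X i j w * Bstar j c + eps i c w in
  (forall B : 'M[R]_(p, r),
     ('E_P[obj X Y D gamma Bac] <= 'E_P[obj X Y D gamma B])%E) ->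
  forall Dq, Dq \in D -> forall l, l \in Dq ->
    col l Bac = col l Bstar +
      (2 * gamma / ((1 + 2 * gamma) * #|Dq|%:R)) *:
        \sum_(c in Dq | c != l) (col c Bstar - col l Bstar).
Proof.
move=> n0 _ mX mE iX iE E0 ind hpd hD g0 Y hmin.
exact: (main_result P n p r X eps n0 mX mE iX iE E0 ind Bstar D gamma Bac hpd hD g0 hmin).
Qed.
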